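(* Let $\mathbf{y}\in\mathbb{R}_\infty$. Then: (i) the Moore–Penrose pseudoinverse $\mathbf{y}^+$ of $\mathbf{y}$ (as a bounded operator on $\ell_{2+}$) belongs to $\mathbb{R}_\infty$; (ii) $\mathbf{y}$ has a unique positive semi-definite square root $\sqrt{\mathbf{y}}$ if and only if $\mathbf{y}\succeq\mathbf{0}$, and furthermore $\sqrt{\mathbf{y}}\in\mathbb{R}_\infty$.
   Context: $\ell_{2+}$ is the Hilbert space of square-summable real sequences $(y[0],y[1],\ldots)$ with inner product $\langle x,y\rangle=\sum_k x[k]y[k]$. The forward shift is $\mathfrak{q}:(y[0],y[1],\ldots)\mapsto(y[1],y[2],\ldots)$, with adjoint $\mathfrak{q}^*:(y[0],y[1],\ldots)\mapsto(0,y[0],y[1],\ldots)$. $\mathbb{R}_\infty=\{\sum_{k=0}^N\alpha_k(\mathfrak{q}^* )^k\mathfrak{q}^k : N\in\mathbb{N},\ \alpha_k\in\mathbb{R}\}$. An operator $\mathbf{M}$ is positive semi-definite, $\mathbf{M}\succeq\mathbf{0}$, if $\mathbf{M}=\mathbf{M}^*$ and $\langle x,\mathbf{M}x\rangle\ge0$ for all $x\in\ell_{2+}$. *)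

(* Defs.v *)
From Stdlib Require Import Reals.
From Coquelicot Require Import Coquelicot.
Open Scope R_scope.

Definition rseq := nat -> R.
Definition l2 (x : rseq) : Prop := ex_series (fun k => (x k) ^ 2).
Definition inner (x y : rseq) : R := Series (fun k => x k * y k).

(* Operators act on sequences; only their action on l2 matters. *)
Definition op := rseq -> rseq.
Definition op_eq (A B : op) : Prop := forall x, l2 x -> forall n, A x n = B x n.
Definition op_comp (A B : op) : op := fun x => A (B x).

Definition bounded_op (M : op) : Prop :=
  (forall x, l2 x -> l2 (M x)) /\
  (forall (a : R) x y, l2 x -> l2 y -> forall n,
      M (fun k => a * x k + y k) n = a * M x n + M y n) /\
  (exists C : R, forall x, l2 x -> inner (M x) (M x) <= C * inner x x).

Definition self_adjoint (M : op) : Prop :=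
  forall x y, l2 x -> l2 y -> inner x (M y) = inner (M x) y.

Definition psd (M : op) : Prop :=
  self_adjoint M /\ forall x, l2 x -> 0 <= inner x (M x).

Definition qsh (x : rseq) : rseq := fun n => x (S n).
Definition qsh_star (x : rseq) : rseq :=
  fun n => match n with O => 0 | S m => x m end.

Definition in_Rinf (M : op) : Prop :=
  exists (N : nat) (alpha : nat -> R), forall x, l2 x -> forall n,
    M x n = sum_f_R0 (fun k => alpha k * Nat.iter k qsh_star (Nat.iter k qsh x) n) N.

Definition is_MP_pinv (Y Z : op) : Prop :=
  bounded_op Z /\
  op_eq (op_comp Y (op_comp Z Y)) Y /\
  op_eq (op_comp Z (op_comp Y Z)) Z /\
  self_adjoint (op_comp Y Z) /\
  self_adjoint (op_comp Z Y).

Definition is_psd_sqrt (Y S : op) : Prop :=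
  bounded_op S /\ psd S /\ op_eq (op_comp S S) Y.

(* Main.v *)
Require Import Defs.
From Stdlib Require Import Reals.
From Coquelicot Require Import Coquelicot.
From Stdlib Require Import FunctionalExtensionality Lia Lra Psatz.
Open Scope R_scope.

Definition diag (g : nat -> R) : op := fun x n => g n * x n.
Definition ev (i : nat) : rseq := fun k => if Nat.eqb k i then 1 else 0.
Definition EC (g : nat -> R) (N : nat) := forall n, g n = g (Nat.min n N).

Lemma is_series_zero : is_series (fun _ : nat => 0) 0.
Proof.
  unfold is_series. eapply filterlim_ext; [|apply filterlim_const].
  intros n; simpl. induction n. rewrite sum_O. reflexivity.
  rewrite sum_Sn, <- IHn. simpl. unfold plus; simpl. unfold zero; simpl. ring.
Qed.

Lemma is_series_unit (i : nat) (a : R) : is_series (fun k => if Nat.eqb k i then a else 0) a.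
Proof.
  revert a; induction i; intros a.
  - apply is_series_decr_1. simpl.
    match goal with |- is_series _ ?l => assert (E : l = 0) by (unfold plus, opp; simpl; ring); rewrite E end.
    apply is_series_zero.
  - apply is_series_decr_1. simpl.
    match goal with |- is_series _ ?l => assert (E : l = a) by (unfold plus, opp; simpl; ring); rewrite E end.
    apply IHi.
Qed.

Lemma ex_series_Rscal c a : ex_series a -> ex_series (fun n => c * a n).
Proof. intros H. exact (ex_series_scal_l c a H). Qed.
Lemma ex_series_Rplus a b : ex_series a -> ex_series b -> ex_series (fun n => a n + b n).
Proof. intros H H'. exact (ex_series_plus a b H H'). Qed.

Lemma ex_series_le_R (a b : nat -> R) : (forall n, Rabs (a n) <= b n) -> ex_series b -> ex_series a.
Proof. intros H1 H2. exact (@ex_series_le _ R_CompleteNormedModule a b H1 H2). Qed.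

Lemma Series_zero : Series (fun _ => 0) = 0.
Proof.
  rewrite (Series_ext _ (fun n => 0 * 1)) by (intros; ring).
  rewrite Series_scal_l. ring.
Qed.

Lemma Series_zero' f : (forall k, f k = 0) -> Series f = 0.
Proof. intros H. rewrite (Series_ext _ (fun _ => 0)) by auto. apply Series_zero. Qed.

Lemma Series_unit i a : Series (fun k => if Nat.eqb k i then a else 0) = a.
Proof. apply is_series_unique, is_series_unit. Qed.

Lemma inner_ev_l i v : inner (ev i) v = v i.
Proof.
  unfold inner, ev.
  rewrite (Series_ext _ (fun k => if Nat.eqb k i then v i else 0)).
  apply Series_unit.
  intros k. destruct (Nat.eqb_spec k i); subst; ring.
Qed.

Lemma l2_ev i : l2 (ev i).
Proof.
  exists 1. eapply is_series_ext; [| apply (is_series_unit i 1)].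
  intros k; unfold ev; destruct (Nat.eqb k i); simpl; ring.
Qed.

Lemma l2_zero : l2 (fun _ => 0).
Proof.
  exists 0. eapply is_series_ext; [| apply is_series_zero].
  intros k; simpl; ring.
Qed.

Lemma l2_sq x : l2 x -> ex_series (fun k => x k * x k).
Proof. apply ex_series_ext. intros; simpl; ring. Qed.

Lemma inner_nonneg x : l2 x -> 0 <= inner x x.
Proof.
  intros H. rewrite <- Series_zero. apply Series_le; [|apply l2_sq; auto].
  intros n; split; [lra| apply Rle_0_sqr].
Qed.

Lemma inner_zero_pt x : l2 x -> inner x x = 0 -> forall i, x i = 0.
Proof.
  intros Hx H0 i.
  assert (x i * x i <= 0).
  { rewrite <- H0. unfold inner. rewrite <- (Series_unit i (x i * x i)).
    apply Series_le; [|apply l2_sq; auto].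
    intros k; destruct (Nat.eqb_spec k i); subst; split;
      try apply Rle_0_sqr; try lra. }
  nra.
Qed.

Lemma sq_le g B : Rabs g <= B -> g * g <= B * B.
Proof.
  intros H. assert (E : g * g = Rabs g * Rabs g).
  { rewrite <- Rabs_mult. rewrite Rabs_pos_eq; [ring|apply Rle_0_sqr]. }
  pose proof (Rabs_pos g). rewrite E. nra.
Qed.

Lemma diag_bounded g B : (forall n, Rabs (g n) <= B) -> bounded_op (diag g).
Proof.
  intros HB. split; [|split].
  - intros x Hx. unfold l2, diag.
    apply (ex_series_le_R _ (fun k => (B * B) * x k ^ 2)).
    + intros n.       rewrite Rabs_pos_eq by (apply pow2_ge_0).
      pose proof (sq_le _ _ (HB n)). pose proof (pow2_ge_0 (x n)). simpl. nra.
    + apply ex_series_Rscal; auto.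
  - intros; unfold diag; ring.
  - exists (B * B). intros x Hx. unfold inner, diag.
    rewrite <- Series_scal_l. apply Series_le.
    + intros n. pose proof (sq_le _ _ (HB n)). pose proof (Rle_0_sqr (x n)).
      unfold Rsqr in *. split; nra.
    + apply ex_series_Rscal, l2_sq; auto.
Qed.

Lemma diag_sa g : self_adjoint (diag g).
Proof. intros x y _ _. unfold inner, diag. apply Series_ext; intros; ring. Qed.

Lemma ex_series_quad g B x : (forall n, Rabs (g n) <= B) -> l2 x ->
  ex_series (fun k => x k * (g k * x k)).
Proof.
  intros HB Hx. apply (ex_series_le_R _ (fun k => B * (x k * x k))).
  - intros n.     rewrite Rabs_mult, Rabs_mult.
    pose proof (Rabs_pos (x n)). pose proof (Rabs_pos (g n)).
    pose proof (HB n).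
    rewrite <- (Rabs_pos_eq (x n * x n)) by apply Rle_0_sqr.
    rewrite Rabs_mult. nra.
  - apply ex_series_Rscal, l2_sq; auto.
Qed.

Lemma sum_le_term (g : nat -> R) : forall M m, (m <= M)%nat ->
  Rabs (g m) <= sum_f_R0 (fun m => Rabs (g m)) M.
Proof.
  induction M; intros m Hm.
  - replace m with 0%nat by lia. simpl. lra.
  - change (sum_f_R0 ?f (S ?M)) with (sum_f_R0 f M + f (S M)).
    destruct (Nat.eq_dec m (S M)).
    + subst. pose proof (cond_pos_sum (fun m => Rabs (g m)) M (fun n => Rabs_pos _)). lra.
    + pose proof (IHM m ltac:(lia)). pose proof (Rabs_pos (g (S M))). lra.
Qed.

Lemma EC_bound g N : EC g N -> forall n, Rabs (g n) <= sum_f_R0 (fun m => Rabs (g m)) N.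
Proof. intros H n. rewrite H. apply sum_le_term. apply Nat.le_min_r. Qed.

Lemma iter_qsh k x n : Nat.iter k qsh x n = x (k + n)%nat.
Proof.
  revert n; induction k; intros n; [reflexivity|].
  change (Nat.iter (S k) qsh x n) with (qsh (Nat.iter k qsh x) n).
  unfold qsh at 1. rewrite IHk. f_equal; lia.
Qed.

Lemma iter_qsh_star k z n : Nat.iter k qsh_star z n = if Nat.leb k n then z (n - k)%nat else 0.
Proof.
  revert n; induction k; intros n.
  - change (Nat.iter 0 qsh_star z n) with (z n). simpl. rewrite Nat.sub_0_r. reflexivity.
  - change (Nat.iter (S k) qsh_star z n) with (qsh_star (Nat.iter k qsh_star z) n).
    unfold qsh_star at 1. destruct n. reflexivity.
    rewrite IHk. reflexivity.
Qed.

Definition ind (k n : nat) : R := if Nat.leb k n then 1 else 0.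

Lemma iter_both k x n : Nat.iter k qsh_star (Nat.iter k qsh x) n = ind k n * x n.
Proof.
  rewrite iter_qsh_star. unfold ind. destruct (Nat.leb_spec k n).
  - rewrite iter_qsh. replace (k + (n - k))%nat with n by lia. ring.
  - ring.
Qed.

Lemma sum_mult_r f c N : sum_f_R0 (fun k => f k * c) N = sum_f_R0 f N * c.
Proof. induction N; simpl; [ring|rewrite IHN; ring]. Qed.

Definition alpha_of (g : nat -> R) (k : nat) : R :=
  match k with O => g O | S j => g (S j) - g j end.

Lemma sum_alpha g n M : sum_f_R0 (fun k => alpha_of g k * ind k n) M = g (Nat.min n M).
Proof.
  induction M.
  - simpl. unfold ind. simpl. rewrite Nat.min_0_r. ring.
  - change (sum_f_R0 ?f (S ?M)) with (sum_f_R0 f M + f (S M)).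
    rewrite IHM. unfold ind. destruct (Nat.leb_spec (S M) n).
    + rewrite !Nat.min_r by lia. simpl. ring.
    + rewrite !Nat.min_l by lia. ring.
Qed.

Lemma EC_Rinf (M : op) g N : EC g N -> (forall x, l2 x -> forall n, M x n = g n * x n) -> in_Rinf M.
Proof.
  intros Hg HM. exists N, (alpha_of g). intros x Hx n.
  rewrite HM by auto. rewrite Hg. rewrite <- (sum_alpha g n N).
  rewrite <- sum_mult_r. apply sum_eq; intros. rewrite iter_both. ring.
Qed.

Lemma Rinf_diag (M : op) : in_Rinf M -> exists d N, EC d N /\
  forall x, l2 x -> forall n, M x n = d n * x n.
Proof.
  intros [N [alpha H]].
  exists (fun n => sum_f_R0 (fun k => alpha k * ind k n) N), N. split.
  - intros n. apply sum_eq. intros k Hk. unfold ind.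
    destruct (Nat.leb_spec k n), (Nat.leb_spec k (Nat.min n N)); try ring; lia.
  - intros x Hx n. rewrite H by auto. rewrite <- sum_mult_r. apply sum_eq; intros.
    rewrite iter_both. ring.
Qed.

Lemma op_zero (M : op) : bounded_op M -> forall n, M (fun _ => 0) n = 0.
Proof.
  intros [_ [Hlin _]] n.
  pose proof (Hlin 1 (fun _ => 0) (fun _ => 0) l2_zero l2_zero n) as H. cbv beta in H.
  replace (fun _ : nat => 1 * 0 + 0) with (fun _ : nat => 0) in H
    by (apply functional_extensionality; intros; ring).
  lra.
Qed.

Lemma op_scal (M : op) : bounded_op M -> forall a x, l2 x -> forall n,
  M (fun k => a * x k) n = a * M x n.
Proof.
  intros HM a x Hx n. pose proof HM as [_ [Hlin _]].
  pose proof (Hlin a x (fun _ => 0) Hx l2_zero n) as H. cbv beta in H.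
  replace (fun k : nat => a * x k + 0) with (fun k : nat => a * x k) in H
    by (apply functional_extensionality; intros; ring).
  rewrite op_zero in H by auto. lra.
Qed.

Lemma l2_lin a x y : l2 x -> l2 y -> l2 (fun k => a * x k + y k).
Proof.
  intros Hx Hy. unfold l2.
  apply (ex_series_le_R _ (fun k => (2 * (a * a)) * x k ^ 2 + 2 * y k ^ 2)).
  - intros n.     rewrite Rabs_pos_eq by (apply pow2_ge_0).
    pose proof (pow2_ge_0 (a * x n - y n)). simpl in *. nra.
  - apply ex_series_Rplus; apply ex_series_Rscal; auto.
Qed.

Lemma l2_ext x x' : (forall k, x k = x' k) -> l2 x -> l2 x'.
Proof. intros H. apply ex_series_ext. intros; rewrite H; auto. Qed.

Lemma l2_diag g B x : (forall n, Rabs (g n) <= B) -> l2 x -> l2 (diag g x).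
Proof. intros HB Hx. destruct (diag_bounded g B HB) as [H _]. auto. Qed.

Section Main.
Variable y : op.
Variable d : nat -> R.
Variable N : nat.
Hypothesis Hd : forall x, l2 x -> forall n, y x n = d n * x n.
Hypothesis ECd : EC d N.

Let Bd := sum_f_R0 (fun m => Rabs (d m)) N.
Lemma dB : forall n, Rabs (d n) <= Bd.
Proof. apply EC_bound; auto. Qed.

Lemma l2y : forall x, l2 x -> l2 (y x).
Proof.
  intros x Hx. apply (l2_ext (diag d x)).
  - intros k; unfold diag; rewrite Hd; auto.
  - apply (l2_diag d Bd); auto using dB.
Qed.

Definition gp (n : nat) : R := if Req_EM_T (d n) 0 then 0 else / d n.

Lemma EC_gp : EC gp N.
Proof. intros n. unfold gp. rewrite (ECd n). reflexivity. Qed.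

Lemma gpB : forall n, Rabs (gp n) <= sum_f_R0 (fun m => Rabs (gp m)) N.
Proof. apply EC_bound, EC_gp. Qed.

Lemma MP_exists : is_MP_pinv y (diag gp).
Proof.
  assert (l2g : forall x, l2 x -> l2 (diag gp x)) by (intros; eapply l2_diag; eauto using gpB).
  split; [|split; [|split; [|split]]].
  - eapply diag_bounded, gpB.
  - intros x Hx n. unfold op_comp. rewrite Hd by (apply l2g, l2y; auto).
    unfold diag. rewrite Hd by auto. unfold gp.
    destruct (Req_EM_T (d n) 0) as [E|E]; [rewrite E; ring| field; auto].
  - intros x Hx n. unfold op_comp. unfold diag at 1 2. rewrite Hd by (apply l2g; auto).
    unfold diag. unfold gp.
    destruct (Req_EM_T (d n) 0) as [E|E]; [ring| field; auto].
  - intros x w Hx Hw. unfold inner, op_comp. apply Series_ext; intros k.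
    rewrite !Hd by (apply l2g; auto). unfold diag; ring.
  - intros x w Hx Hw. unfold inner, op_comp. apply Series_ext; intros k.
    unfold diag. rewrite !Hd by auto. ring.
Qed.

Lemma MP_unique z : is_MP_pinv y z -> forall x, l2 x -> forall n, z x n = gp n * x n.
Proof.
  intros [Zb [P1 [P2 [SA1 SA2]]]].
  pose proof Zb as [Zl2 [Zlin _]]. unfold op_eq, op_comp in P1, P2.
  assert (C1 : forall i, d i <> 0 -> forall x, l2 x -> z x i = x i / d i).
  { intros i Hi x Hx.
    pose proof (SA1 (ev i) x (l2_ev i) Hx) as H. unfold op_comp in H.
    rewrite inner_ev_l in H. rewrite Hd in H by auto.
    set (v := fun k => / d i * ev i k).
    assert (Hv : l2 v) by (apply (l2_ext (fun k => / d i * ev i k + 0)); [intros; unfold v; cbv beta; ring|];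
                           apply l2_lin; [apply l2_ev|apply l2_zero]).
    assert (Hev : y v = ev i).
    { apply functional_extensionality; intros k. rewrite Hd by auto. unfold v, ev.
      destruct (Nat.eqb_spec k i); [subst; field; auto| ring]. }
    assert (H2 : inner (y (z (ev i))) x = x i).
    { rewrite <- Hev. rewrite <- (inner_ev_l i x). unfold inner. apply Series_ext; intros k.
      rewrite P1 by auto. rewrite Hev. ring. }
    rewrite H2 in H. field_simplify_eq; auto. lra. }
  assert (C2 : forall i, d i = 0 -> forall x, l2 x -> z x i = 0).
  { intros i Hi x Hx.
    set (v := diag gp x).
    assert (Hv : l2 v) by (eapply l2_diag; eauto using gpB).
    assert (Hyz : y (z x) = y v).
    { apply functional_extensionality; intros k. rewrite !Hd by auto. unfold v, diag, gp.
      destruct (Req_EM_T (d k) 0) as [E|E]; [rewrite E; ring|].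
      rewrite C1 by auto. field; auto. }
    rewrite <- P2 by auto. unfold op_comp. rewrite Hyz.
    pose proof (SA2 (ev i) v (l2_ev i) Hv) as H. unfold op_comp in H.
    rewrite inner_ev_l in H. rewrite H.
    assert (Hy0 : y (ev i) = fun _ => 0).
    { apply functional_extensionality; intros k. rewrite Hd by apply l2_ev. unfold ev.
      destruct (Nat.eqb_spec k i); [subst; rewrite Hi|]; ring. }
    rewrite Hy0. unfold inner. apply Series_zero'. intros k. rewrite op_zero by auto. ring. }
  intros x Hx n. unfold gp. destruct (Req_EM_T (d n) 0) as [E|E].
  - rewrite C2 by auto. ring.
  - rewrite C1 by auto. unfold Rdiv; ring.
Qed.

Lemma sqrt_unique s : is_psd_sqrt y s ->
  (forall i, 0 <= d i) /\ forall x, l2 x -> forall n, s x n = sqrt (d n) * x n.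
Proof.
  intros [Sb [[Ssa Spos] Ssq]].
  pose proof Sb as [Sl2 [Slin _]]. unfold op_eq, op_comp in Ssq.
  assert (F1 : forall x, l2 x -> forall i, s x i = inner (s (ev i)) x).
  { intros x Hx i. rewrite <- (inner_ev_l i (s x)). apply Ssa; auto using l2_ev. }
  assert (dnn : forall i, 0 <= d i).
  { intros i. replace (d i) with (y (ev i) i)
      by (rewrite Hd by apply l2_ev; unfold ev; rewrite Nat.eqb_refl; ring).
    rewrite <- Ssq by apply l2_ev. rewrite <- inner_ev_l.
    rewrite Ssa by auto using l2_ev. apply inner_nonneg; auto using l2_ev. }
  split; [exact dnn|].
  assert (F2 : forall i k, d i <> d k -> s (ev i) k = 0).
  { intros i k Hik.
    assert (E1 : s (s (s (ev i))) k = d k * s (ev i) k)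
      by (rewrite Ssq by auto using l2_ev; rewrite Hd; auto using l2_ev).
    assert (E2 : s (s (ev i)) = fun k => d i * ev i k).
    { apply functional_extensionality; intros m. rewrite Ssq, Hd by apply l2_ev.
      unfold ev. destruct (Nat.eqb_spec m i); [subst|]; ring. }
    rewrite E2, op_scal in E1 by auto using l2_ev.
    assert (E : (d i - d k) * s (ev i) k = 0) by (rewrite Rmult_minus_distr_r; lra).
    apply Rmult_integral in E. destruct E as [E|E]; [exfalso; lra|exact E]. }
  intros x Hx i.
  set (c := d i).
  set (u := fun k => if Req_EM_T (d k) c then x k else 0).
  assert (Hu : l2 u).
  { unfold l2. apply (ex_series_le_R _ (fun k => x k ^ 2)); auto.
    intros n. rewrite Rabs_pos_eq by apply pow2_ge_0. unfold u.
    destruct (Req_EM_T (d n) c); [lra|]. simpl. pose proof (pow2_ge_0 (x n)). simpl in *. lra. }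
  assert (F3 : s x i = s u i).
  { rewrite !F1 by auto. unfold inner. apply Series_ext. intros k. unfold u.
    destruct (Req_EM_T (d k) c); [reflexivity|]. rewrite F2 by (unfold c in *; auto). ring. }
  assert (F4 : forall k, d k <> c -> s u k = 0).
  { intros k Hk. rewrite F1 by auto. unfold inner. apply Series_zero'. intros m. unfold u.
    destruct (Req_EM_T (d m) c) as [E|E]; [|ring].
    rewrite F2; [ring|]. rewrite E; auto. }
  set (su := s u).
  assert (Hsu : l2 su) by (apply Sl2; auto).
  assert (Hss : forall k, s su k = c * u k).
  { intros k. unfold su. rewrite Ssq, Hd by auto. unfold u.
    destruct (Req_EM_T (d k) c) as [E|E]; [rewrite E|]; ring. }
  assert (cnn : 0 <= c) by apply dnn.
  set (w := fun k => (- sqrt c) * u k + su k).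
  assert (Hw : l2 w) by (apply l2_lin; auto).
  assert (Hsw : s w = fun k => - sqrt c * w k).
  { apply functional_extensionality; intros k. unfold w. rewrite Slin by auto.
    fold su. rewrite Hss. pose proof (sqrt_sqrt c cnn) as Hsq.
    replace (c * u k) with (sqrt c * sqrt c * u k) by (rewrite Hsq; ring). ring. }
  assert (Hww : inner w w = 0).
  { pose proof (Spos w Hw) as Hp. rewrite Hsw in Hp. unfold inner in Hp.
    rewrite (Series_ext _ (fun k => - sqrt c * (w k * w k))) in Hp by (intros; ring).
    rewrite Series_scal_l in Hp. fold (inner w w) in Hp.
    pose proof (inner_nonneg w Hw). pose proof (sqrt_pos c).
    destruct (Rle_lt_or_eq_dec 0 (sqrt c) (sqrt_pos c)) as [Hc|Hc].
    - nra.
    - assert (c = 0) by (rewrite <- (sqrt_sqrt c cnn), <- Hc; ring).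
      transitivity (inner su su).
      { unfold inner. apply Series_ext. intros k. unfold w. rewrite <- Hc. ring. }
      change (inner (s u) su = 0). rewrite <- (Ssa u su Hu Hsu).
      unfold inner. apply Series_zero'. intros k. rewrite Hss, H1. ring. }
  pose proof (inner_zero_pt w Hw Hww i) as Hwi. unfold w in Hwi.
  rewrite F3. fold su. assert (u i = x i) by (unfold u; destruct (Req_EM_T (d i) c); [auto|exfalso; auto]).
  assert (Hwi2 : su i = sqrt c * u i) by lra. rewrite Hwi2, H. reflexivity.
Qed.

Lemma sqrt_exists : (forall i, 0 <= d i) -> is_psd_sqrt y (diag (fun n => sqrt (d n))).
Proof.
  intros dnn.
  assert (EC_h : EC (fun n => sqrt (d n)) N) by (intros n; cbv beta; rewrite (ECd n); reflexivity).
  pose proof (EC_bound _ _ EC_h) as hB.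
  split; [|split; [split|]].
  - eapply diag_bounded, hB.
  - apply diag_sa.
  - intros x Hx. rewrite <- Series_zero. unfold inner. apply Series_le.
    + intros n. unfold diag. split; [lra|]. pose proof (sqrt_pos (d n)).
      pose proof (Rle_0_sqr (x n)). unfold Rsqr in *. nra.
    + eapply ex_series_quad; eauto.
  - intros x Hx n. unfold op_comp, diag. rewrite Hd by auto.
    rewrite <- Rmult_assoc, sqrt_sqrt by auto. ring.
Qed.

Lemma psd_y_iff : psd y <-> forall i, 0 <= d i.
Proof.
  split.
  - intros [_ Hp] i. pose proof (Hp (ev i) (l2_ev i)) as H. rewrite inner_ev_l in H.
    rewrite Hd in H by apply l2_ev. unfold ev in H. rewrite Nat.eqb_refl in H. lra.
  - intros dnn. split.
    + intros x w Hx Hw. unfold inner. apply Series_ext. intros k. rewrite !Hd by auto. ring.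
    + intros x Hx. unfold inner.
      rewrite (Series_ext _ (fun k => x k * (d k * x k))) by (intros; rewrite Hd; auto).
      rewrite <- Series_zero. apply Series_le.
      * intros n. split; [lra|]. pose proof (dnn n).
        pose proof (Rle_0_sqr (x n)). unfold Rsqr in *. nra.
      * eapply ex_series_quad; eauto using dB.
Qed.

End Main.

Theorem lemma2 (y : op) (hy : in_Rinf y) :
  ((exists z, is_MP_pinv y z) /\ (forall z, is_MP_pinv y z -> in_Rinf z)) /\
  (((exists s, is_psd_sqrt y s) /\
    (forall s1 s2, is_psd_sqrt y s1 -> is_psd_sqrt y s2 -> op_eq s1 s2))
   <-> psd y) /\
  (forall s, is_psd_sqrt y s -> in_Rinf s).
Proof.
  destruct (Rinf_diag y hy) as [d [N [ECd Hd]]].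
  split; [split|split; [split|]].
  - exists (diag (gp d)). eapply MP_exists; eauto.
  - intros z Hz. apply (EC_Rinf z (gp d) N).
    + apply EC_gp; auto.
    + eapply MP_unique; eauto.
  - intros [[s Hs] _]. apply (psd_y_iff y d N Hd ECd).
    exact (proj1 (sqrt_unique y d Hd s Hs)).
  - intros Hp. pose proof (proj1 (psd_y_iff y d N Hd ECd) Hp) as dnn. split.
    + exists (diag (fun n => sqrt (d n))). eapply sqrt_exists; eauto.
    + intros s1 s2 H1 H2 x Hx n.
      rewrite (proj2 (sqrt_unique y d Hd s1 H1)), (proj2 (sqrt_unique y d Hd s2 H2)); auto.
  - intros s Hs. apply (EC_Rinf s (fun n => sqrt (d n)) N).
    + intros n. cbv beta. rewrite (ECd n). reflexivity.
    + exact (proj2 (sqrt_unique y d Hd s Hs)).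
Qed.
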